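(* Let $v\in C^1(\mathbb{R}^2)$ be a classical solution of the stationary Euler equations on $\mathbb{R}^2$. Suppose there is a bounded region $\Omega\subset\mathbb{R}^2$ with $C^1$ boundary, whose boundary consists of $J\ge1$ connected components, such that $v=\nabla^\perp\bar\psi$ in $\Omega$ and $v=0$ in $\mathbb{R}^2\setminus\Omega$, where $\bar\psi\in C^2(\overline\Omega)$ solves $\Delta\bar\psi+f(\bar\psi)=0$ in $\Omega$ for some $f\in C(\mathbb{R})$. Then $v=\nabla^\perp\psi$ for some $\psi\in C^2(\mathbb{R}^2)$ which satisfies $\Delta\psi+f(\psi)=0$ in all of $\mathbb{R}^2$.
   Context: The stationary Euler equations on $\mathbb{R}^2$: $v\cdot\nabla v+\nabla p=0$ and $\operatorname{div}v=0$ for some pressure $p$. $\nabla^\perp\psi:=(\partial_{x_2}\psi,-\partial_{x_1}\psi)$. *)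

(* Defs.v *)
From Stdlib Require Import Reals.
From Coquelicot Require Import Coquelicot.
Open Scope R_scope.

Definition set2 := R -> R -> Prop.

Definition ball2 (a b r : R) : set2 :=
  fun x y => (x - a) ^ 2 + (y - b) ^ 2 < r ^ 2.

Definition open2 (U : set2) : Prop :=
  forall a b, U a b -> exists r, 0 < r /\ forall x y, ball2 a b r x y -> U x y.

Definition bounded2 (U : set2) : Prop :=
  exists M, forall x y, U x y -> Rabs x <= M /\ Rabs y <= M.

Definition closure2 (U : set2) : set2 :=
  fun a b => forall r, 0 < r -> exists x y, U x y /\ ball2 a b r x y.

Definition bdry2 (U : set2) : set2 := fun a b => closure2 U a b /\ ~ U a b.

Definition connected2 (S : set2) : Prop :=
  forall U V, open2 U -> open2 V ->
    (forall x y, S x y -> U x y \/ V x y) ->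
    (forall x y, S x y -> U x y -> V x y -> False) ->
    (forall x y, S x y -> ~ U x y) \/ (forall x y, S x y -> ~ V x y).

Definition closed2 (S : set2) : Prop := forall a b, closure2 S a b -> S a b.

Definition pd1 (f : R -> R -> R) : R -> R -> R := fun x y => Derive (fun t => f t y) x.
Definition pd2 (f : R -> R -> R) : R -> R -> R := fun x y => Derive (fun t => f x t) y.

Definition cont2 (g : R -> R -> R) (x y : R) : Prop :=
  continuous (fun p : R * R => g (fst p) (snd p)) (x, y).

Definition C1_on (U : set2) (f : R -> R -> R) : Prop :=
  forall x y, U x y ->
    ex_derive (fun t => f t y) x /\ ex_derive (fun t => f x t) y /\
    cont2 f x y /\ cont2 (pd1 f) x y /\ cont2 (pd2 f) x y.

Definition C2_on (U : set2) (f : R -> R -> R) : Prop :=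
  C1_on U f /\ C1_on U (pd1 f) /\ C1_on U (pd2 f).

Definition whole : set2 := fun _ _ => True.

Definition ext_cont_closure (U : set2) (h : R -> R -> R) : Prop :=
  forall a b, closure2 U a b -> exists l, forall eps, 0 < eps ->
    exists delta, 0 < delta /\
      forall x y, U x y -> ball2 a b delta x y -> Rabs (h x y - l) < eps.

Definition C2_closure (U : set2) (f : R -> R -> R) : Prop :=
  C2_on U f /\
  ext_cont_closure U f /\
  ext_cont_closure U (pd1 f) /\ ext_cont_closure U (pd2 f) /\
  ext_cont_closure U (pd1 (pd1 f)) /\ ext_cont_closure U (pd2 (pd1 f)) /\
  ext_cont_closure U (pd1 (pd2 f)) /\ ext_cont_closure U (pd2 (pd2 f)).

Definition C1_boundary (U : set2) : Prop :=
  forall a b, bdry2 U a b -> exists r phi, 0 < r /\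
    C1_on (ball2 a b r) phi /\
    (forall x y, ball2 a b r x y -> pd1 phi x y <> 0 \/ pd2 phi x y <> 0) /\
    (forall x y, ball2 a b r x y -> (U x y <-> phi x y < 0)).

(* The set S is the disjoint union of exactly J nonempty closed connected
   sets C 0, ..., C (J-1); equivalently S has exactly J connected components. *)
Definition has_J_components (S : set2) (J : nat) : Prop :=
  exists C : nat -> set2,
    (forall i, (i < J)%nat -> (exists x y, C i x y) /\ connected2 (C i) /\ closed2 (C i)) /\
    (forall i j x y, (i < J)%nat -> (j < J)%nat -> i <> j -> C i x y -> C j x y -> False) /\
    (forall x y, S x y <-> exists i, (i < J)%nat /\ C i x y).

Definition laplacian2 (f : R -> R -> R) : R -> R -> R :=
  fun x y => pd1 (pd1 f) x y + pd2 (pd2 f) x y.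

Definition stationary_euler (v1 v2 : R -> R -> R) : Prop :=
  C1_on whole v1 /\ C1_on whole v2 /\
  exists p : R -> R -> R, C1_on whole p /\
    forall x y,
      v1 x y * pd1 v1 x y + v2 x y * pd2 v1 x y + pd1 p x y = 0 /\
      v1 x y * pd1 v2 x y + v2 x y * pd2 v2 x y + pd2 p x y = 0 /\
      pd1 v1 x y + pd2 v2 x y = 0.

Definition contR1 (f : R -> R) (x : R) : Prop := continuous f x.

(* Main.v *)
Require Import Defs.
From Stdlib Require Import Reals Lra Psatz Lia FunctionalExtensionality Classical.
From Coquelicot Require Import Coquelicot.
Open Scope R_scope.

Lemma locR (x r : R) (P : R -> Prop) : 0 < r -> (forall t, Rabs (t - x) < r -> P t) -> locally x P.
Proof.
  intros Hr H. exists (mkposreal r Hr). intros t Ht. apply H. exact Ht.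
Qed.

Lemma locR_inv (x : R) (P : R -> Prop) : locally x P -> exists r, 0 < r /\ forall t, Rabs (t - x) < r -> P t.
Proof.
  intros [e He]. exists e. split. apply cond_pos. intros t Ht. apply He. exact Ht.
Qed.

Lemma cont2_2d g x y : cont2 g x y <-> continuity_2d_pt g x y.
Proof. rewrite continuity_2d_pt_filterlim. unfold cont2. tauto. Qed.

Lemma cont2_line1 g x y : cont2 g x y -> continuous (fun t => g t y) x.
Proof.
  intros H. apply (continuous_comp_2 (fun t => t) (fun _ => y) g x).
  apply continuous_id. apply continuous_const. exact H.
Qed.

Lemma cont2_line2 g x y : cont2 g x y -> continuous (fun t => g x t) y.
Proof.
  intros H. apply (continuous_comp_2 (fun _ => x) (fun t => t) g y).
  apply continuous_const. apply continuous_id. exact H.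
Qed.

Lemma cont_affine a d t : continuous (fun s => a + s * d) t.
Proof. apply (ex_derive_continuous (K:=R_AbsRing) (V:=R_NormedModule) (fun s => a + s*d)). auto_derive. auto. Qed.

Lemma cont2_affine g a b dx dy t :
  cont2 g (a + t * dx) (b + t * dy) -> continuous (fun s => g (a + s*dx) (b + s*dy)) t.
Proof.
  intros H. apply (continuous_comp_2 (fun s => a + s*dx) (fun s => b + s*dy) g t).
  apply cont_affine. apply cont_affine. exact H.
Qed.

Lemma is_derive_cpt f x l : is_derive f x l -> continuity_pt f x.
Proof.
  intros H. apply continuity_pt_filterlim.
  apply (ex_derive_continuous (K:=R_AbsRing) (V:=R_NormedModule)). exists l; exact H.
Qed.

Lemma minmax_bound a b c : Rmin a b <= c <= Rmax a b -> Rabs (c - a) <= Rabs (b - a).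
Proof. unfold Rmin, Rmax; destruct Rle_dec; intros; split_Rabs; lra. Qed.

Lemma mvt (f df : R -> R) a b :
  (forall t, is_derive f t (df t)) -> exists c, Rmin a b <= c <= Rmax a b /\ f b - f a = df c * (b - a).
Proof.
  intros H. apply MVT_gen. intros; apply H. intros; eapply is_derive_cpt; apply H.
Qed.

Lemma diff_partials (g d1 d2 : R -> R -> R) x y :
 (forall u v, is_derive (fun t => g t v) u (d1 u v)) ->
 (forall u v, is_derive (fun t => g u t) v (d2 u v)) ->
 continuity_2d_pt d1 x y -> continuity_2d_pt d2 x y ->
 differentiable_pt_lim g x y (d1 x y) (d2 x y).
Proof.
  intros H1 H2 C1 C2 eps.
  assert (He2 : 0 < eps / 2) by (destruct eps; simpl; lra).
  destruct (C1 (mkposreal _ He2)) as [d1' Hd1].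
  destruct (C2 (mkposreal _ He2)) as [d2' Hd2].
  assert (Hm : 0 < Rmin d1' d2') by (apply Rmin_pos; apply cond_pos).
  exists (mkposreal _ Hm). simpl. intros u v Hu Hv.
  destruct (mvt (fun t => g t v) (fun t => d1 t v) x u (fun t => H1 t v)) as [c [Hc Ec]].
  destruct (mvt (fun t => g x t) (fun t => d2 x t) y v (fun t => H2 x t)) as [c' [Hc' Ec']].
  apply minmax_bound in Hc. apply minmax_bound in Hc'.
  assert (Hm1 := Rmin_l d1' d2'). assert (Hm2 := Rmin_r d1' d2').
  assert (B1 : Rabs (d1 c v - d1 x y) < eps / 2).
  { apply Hd1; lra. }
  assert (B2 : Rabs (d2 x c' - d2 x y) < eps / 2).
  { apply Hd2. rewrite Rminus_diag, Rabs_R0. destruct d2'; simpl in *; lra. lra. }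
  replace (g u v - g x y - (d1 x y * (u - x) + d2 x y * (v - y))) with
    ((d1 c v - d1 x y) * (u - x) + (d2 x c' - d2 x y) * (v - y)) by lra.
  eapply Rle_trans. apply Rabs_triang. rewrite !Rabs_mult.
  assert (M1 := Rmax_l (Rabs (u - x)) (Rabs (v - y))).
  assert (M2 := Rmax_r (Rabs (u - x)) (Rabs (v - y))).
  assert (A1 := Rabs_pos (u - x)). assert (A2 := Rabs_pos (v - y)).
  assert (A3 := Rabs_pos (d1 c v - d1 x y)). assert (A4 := Rabs_pos (d2 x c' - d2 x y)).
  nra.
Qed.



Lemma c2d_swap g x y : continuity_2d_pt g x y -> continuity_2d_pt (fun u v => g v u) y x.
Proof. intros H eps. destruct (H eps) as [d Hd]. exists d. intros u v Hu Hv. apply Hd; auto. Qed.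

Definition Psi (v1 v2 : R -> R -> R) x y := RInt (fun s => v1 0 s) 0 y - RInt (fun t => v2 t y) 0 x.

Lemma C1_d1 v : C1_on whole v -> forall x y, is_derive (fun t => v t y) x (pd1 v x y).
Proof. intros H x y. apply Derive_correct. apply (H x y I). Qed.
Lemma C1_d2 v : C1_on whole v -> forall x y, is_derive (fun t => v x t) y (pd2 v x y).
Proof. intros H x y. apply Derive_correct. apply (H x y I). Qed.

Lemma ex_RInt_line1 v y a b : C1_on whole v -> ex_RInt (fun t => v t y) a b.
Proof. intros H. apply (ex_RInt_continuous (V:=R_CompleteNormedModule)). intros z _. apply cont2_line1. apply (H z y I). Qed.
Lemma ex_RInt_line2 v x a b : C1_on whole v -> ex_RInt (fun t => v x t) a b.
Proof. intros H. apply (ex_RInt_continuous (V:=R_CompleteNormedModule)). intros z _. apply cont2_line2. apply (H x z I). Qed.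

Lemma is_derive_prim (h : R -> R) x : (forall z, continuous h z) ->
  is_derive (fun t => RInt h 0 t) x (h x).
Proof.
  intros H. apply is_derive_RInt with (a := 0).
  apply filter_forall. intros b. apply RInt_correct. apply (ex_RInt_continuous (V:=R_CompleteNormedModule)). intros; apply H.
  apply H.
Qed.

Lemma Psi_d1 v1 v2 x y : C1_on whole v2 ->
  is_derive (fun t => Psi v1 v2 t y) x (- v2 x y).
Proof.
  intros H2. unfold Psi.
  assert (D := is_derive_minus _ _ x _ _ (is_derive_const (RInt (fun s => v1 0 s) 0 y) x)
     (is_derive_prim (fun t => v2 t y) x (fun z => cont2_line1 _ _ _ (proj1 (proj2 (proj2 (H2 z y I))))))).
  replace (- v2 x y) with (minus zero (v2 x y)). exact D.
  unfold minus, zero, plus, opp; simpl. ring.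
Qed.

Lemma Psi_d2 v1 v2 x y : C1_on whole v1 -> C1_on whole v2 ->
  (forall x y, pd1 v1 x y + pd2 v2 x y = 0) ->
  is_derive (fun t => Psi v1 v2 x t) y (v1 x y).
Proof.
  intros H1 H2 Hdiv. unfold Psi.
  assert (DA := is_derive_prim (fun s => v1 0 s) y (fun z => cont2_line2 _ _ _ (proj1 (proj2 (proj2 (H1 0 z I)))))).
  assert (DB : is_derive (fun u => RInt (fun t => v2 t u) 0 x) y
                 (RInt (fun t => Derive (fun u => v2 t u) y) 0 x)).
  { apply (is_derive_RInt_param (fun u t => v2 t u)).
    - apply filter_forall. intros u t _. apply (H2 t u I).
    - intros t _. apply (c2d_swap (pd2 v2)). apply cont2_2d. apply (H2 t y I).
    - apply filter_forall. intros u. apply ex_RInt_line1. exact H2. }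
  assert (E : RInt (fun t => Derive (fun u => v2 t u) y) 0 x = - (v1 x y - v1 0 y)).
  { rewrite (RInt_ext _ (fun t => opp (Derive (fun z => v1 z y) t))).
    rewrite (RInt_opp (V:=R_CompleteNormedModule)). rewrite RInt_Derive. reflexivity.
    intros z _. apply (H1 z y I).
    intros z _. apply (cont2_line1 (pd1 v1) z y). apply (H1 z y I).
    apply (ex_RInt_continuous (V:=R_CompleteNormedModule)). intros z _. apply (cont2_line1 (pd1 v1) z y). apply (H1 z y I).
    intros t _. assert (Hd := Hdiv t y). unfold pd1, pd2 in Hd. unfold opp; simpl. lra. }
  rewrite E in DB.
  assert (D := is_derive_minus _ _ y _ _ DA DB).
  replace (v1 x y) with (minus (v1 0 y) (- (v1 x y - v1 0 y))). exact D.
  unfold minus, plus, opp; simpl. ring.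
Qed.


Lemma ball_box a b r x y : 0 < r -> ball2 a b r x y -> Rabs (x - a) < r /\ Rabs (y - b) < r.
Proof. unfold ball2; intros Hr H. assert (0 <= (y-b)^2) by apply pow2_ge_0. assert (0 <= (x-a)^2) by apply pow2_ge_0. split; apply Rabs_def1; nra. Qed.

Lemma box_ball a b r x y : 0 < r -> Rabs (x - a) < r / 2 -> Rabs (y - b) < r / 2 -> ball2 a b r x y.
Proof. unfold ball2; intros Hr H1 H2. split_Rabs; nra. Qed.

Lemma in_closure (U : set2) a b : U a b -> closure2 U a b.
Proof. intros H r Hr. exists a, b. split. exact H. unfold ball2. nra. Qed.

Lemma closure_box (U : set2) a b : closure2 U a b -> forall r, 0 < r ->
  exists x y, U x y /\ Rabs (x - a) < r /\ Rabs (y - b) < r.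
Proof.
  intros H r Hr. destruct (H r Hr) as [x [y [Hu Hb]]]. exists x, y.
  destruct (ball_box _ _ _ _ _ Hr Hb). auto.
Qed.

Lemma not_closure_open (U : set2) a b : ~ closure2 U a b ->
  exists r, 0 < r /\ forall x y, Rabs (x - a) < r -> Rabs (y - b) < r -> ~ U x y /\ ~ closure2 U x y.
Proof.
  intros H. unfold closure2 in H.
  apply not_all_ex_not in H. destruct H as [r0 H].
  apply imply_to_and in H. destruct H as [Hr0 H].
  exists (r0 / 4). split. lra. intros x y Hx Hy. split.
  - intros Hu. apply H. exists x, y. split. exact Hu. apply box_ball; lra.
  - intros Hc. destruct (closure_box U x y Hc (r0/4)) as [u [w [Hu [H1 H2]]]]. lra.
    apply H. exists u, w. split. exact Hu. apply box_ball. lra.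
    split_Rabs; lra. split_Rabs; lra.
Qed.

Lemma zero_on_closure (U : set2) (G : R -> R -> R) a b :
  (forall x y, U x y -> G x y = 0) -> continuity_2d_pt G a b -> closure2 U a b -> G a b = 0.
Proof.
  intros H0 HC Hcl. apply NNPP. intros Hne.
  assert (Hp : 0 < Rabs (G a b)) by (apply Rabs_pos_lt; exact Hne).
  destruct (HC (mkposreal _ Hp)) as [d Hd].
  destruct (closure_box U a b Hcl d (cond_pos d)) as [x [y [Hu [H1 H2]]]].
  specialize (Hd x y H1 H2). simpl in Hd. rewrite (H0 x y Hu) in Hd.
  rewrite Rminus_0_l, Rabs_Ropp in Hd. lra.
Qed.

Lemma vanish_pd (U : set2) (v : R -> R -> R) a b :
  ~ closure2 U a b -> (forall x y, ~ U x y -> v x y = 0) -> pd1 v a b = 0 /\ pd2 v a b = 0.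
Proof.
  intros Hn Hv. destruct (not_closure_open U a b Hn) as [r [Hr Hb]].
  split.
  - unfold pd1. rewrite (Derive_ext_loc _ (fun _ => 0)). apply Derive_const.
    apply (locR _ r). exact Hr. intros t Ht. apply Hv. apply (Hb t b Ht). rewrite Rminus_diag, Rabs_R0; lra.
  - unfold pd2. rewrite (Derive_ext_loc _ (fun _ => 0)). apply Derive_const.
    apply (locR _ r). exact Hr. intros t Ht. apply Hv. apply (Hb a t). rewrite Rminus_diag, Rabs_R0; lra. exact Ht.
Qed.

Lemma mvt0 (h : R -> R) a b :
  (forall t, Rmin a b < t < Rmax a b -> is_derive h t 0) -> (forall t, Rmin a b <= t <= Rmax a b -> continuity_pt h t) -> h b = h a.
Proof.
  intros H1 H2. destruct (MVT_gen h a b (fun _ => 0) H1 H2) as [c [_ Hc]]. lra.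
Qed.

Lemma sq_le a b c : Rmin a b <= c <= Rmax a b -> (c - a) ^ 2 <= (b - a) ^ 2.
Proof. intros H. apply minmax_bound in H. rewrite <- (pow2_abs (c - a)), <- (pow2_abs (b - a)).
  apply pow_incr. split. apply Rabs_pos. exact H. Qed.

Lemma ball_const (U : set2) (g : R -> R -> R) a b r :
  (forall x y, ball2 a b r x y -> U x y) ->
  (forall x y, U x y -> is_derive (fun t => g t y) x 0) ->
  (forall x y, U x y -> is_derive (fun t => g x t) y 0) ->
  forall x y, ball2 a b r x y -> g x y = g a b.
Proof.
  intros HU D1 D2 x y Hb.
  assert (E1 : g x b = g a b).
  { apply (mvt0 (fun t => g t b)).
    - intros t Ht. apply D1. apply HU. unfold ball2 in *.
      assert (Hs := sq_le a x t (conj (Rlt_le _ _ (proj1 Ht)) (Rlt_le _ _ (proj2 Ht)))).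
      assert (Y := pow2_ge_0 (y - b)). rewrite Rminus_diag. replace (0^2) with 0 by ring. lra.
    - intros t Ht. eapply is_derive_cpt. apply D1. apply HU. unfold ball2 in *.
      assert (Hs := sq_le a x t Ht).
      assert (Y := pow2_ge_0 (y - b)). rewrite Rminus_diag. replace (0^2) with 0 by ring. lra. }
  assert (E2 : g x y = g x b).
  { apply (mvt0 (fun t => g x t)).
    - intros t Ht. apply D2. apply HU. unfold ball2 in *.
      assert (Hs := sq_le b y t (conj (Rlt_le _ _ (proj1 Ht)) (Rlt_le _ _ (proj2 Ht)))). lra.
    - intros t Ht. eapply is_derive_cpt. apply D2. apply HU. unfold ball2 in *.
      assert (Hs := sq_le b y t Ht). lra. }
  congruence.
Qed.

Lemma first_hit (P : R -> Prop) :
  ~ P 0 -> P 1 ->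
  (forall t, ~ P t -> exists d, 0 < d /\ forall s, Rabs (s - t) < d -> ~ P s) ->
  exists ts, 0 < ts <= 1 /\ P ts /\ forall s, 0 <= s < ts -> ~ P s.
Proof.
  intros H0 H1 Hop.
  set (T := fun t => 0 <= t <= 1 /\ forall s, 0 <= s <= t -> ~ P s).
  assert (Hb : bound T). { exists 1. intros t [Ht _]. lra. }
  assert (He : exists x, T x). { exists 0. split. lra. intros s Hs. replace s with 0 by lra. exact H0. }
  destruct (completeness T Hb He) as [m [Hub Hlub]].
  assert (Hm0 : 0 <= m). { apply Hub. unfold T. split. lra. intros s Hs. replace s with 0 by lra. exact H0. }
  assert (Hm1 : m <= 1). { apply Hlub. intros t [Ht _]. lra. }
  assert (Hi : forall s, 0 <= s < m -> ~ P s).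
  { intros s Hs Ps. assert (m <= s). { apply Hlub. intros t [Ht Hts]. destruct (Rle_lt_dec t s). lra.
      exfalso. apply (Hts s). lra. exact Ps. } lra. }
  assert (Hii : P m).
  { apply NNPP. intros Hn. destruct (Hop m Hn) as [d [Hd Hs]].
    destruct (Req_dec m 1) as [E|E]. subst m. contradiction.
    set (t' := Rmin (m + d/2) 1).
    assert (Ht1 := Rmin_l (m + d/2) 1). assert (Ht2 := Rmin_r (m + d/2) 1).
    assert (Ht' : m < t'). { unfold t'. unfold Rmin. destruct Rle_dec; lra. }
    assert (T t').
    { split. fold t' in Ht1, Ht2. lra. intros s Hs'. destruct (Rlt_le_dec s m).
      apply Hi; lra. apply Hs. fold t' in Ht1, Ht2. split_Rabs; lra. }
    assert (t' <= m) by (apply Hub; assumption). lra. }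
  exists m. split. split. destruct (Req_dec m 0) as [E|E]. subst m. contradiction. lra. lra.
  split; assumption.
Qed.

Lemma lim_left_zero (k : R -> R) ts :
  continuous k ts -> 0 < ts -> (forall s, 0 <= s < ts -> k s = 0) -> k ts = 0.
Proof.
  intros Hc Hts H0. apply NNPP. intros Hne.
  assert (Hp : 0 < Rabs (k ts)) by (apply Rabs_pos_lt; exact Hne).
  apply filterlim_locally with (eps := mkposreal _ Hp) in Hc.
  destruct (locR_inv _ _ Hc) as [r [Hr Hl]].
  set (s := Rmax 0 (ts - r/2)).
  assert (S1 := Rmax_l 0 (ts - r/2)). assert (S2 := Rmax_r 0 (ts - r/2)).
  assert (Hs : 0 <= s < ts). { unfold s, Rmax. destruct Rle_dec; lra. }
  assert (Hsr : Rabs (s - ts) < r). { unfold s in *. unfold Rmax in *. destruct Rle_dec; split_Rabs; lra. }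
  specialize (Hl s Hsr). simpl in Hl. unfold ball in Hl. simpl in Hl. unfold AbsRing_ball in Hl.
  rewrite (H0 s Hs) in Hl. unfold abs, minus, plus, opp in Hl. simpl in Hl.
  rewrite Rplus_0_l, Rabs_Ropp in Hl. lra.
Qed.

Lemma is_derive_eq (f : R -> R) x l l' : is_derive f x l -> l = l' -> is_derive f x l'.
Proof. intros H E; subst; exact H. Qed.

Lemma is_derive_sub_const (h : R -> R) x l c : is_derive h x l -> is_derive (fun t => h t - c) x l.
Proof.
  intros H. assert (D := is_derive_minus _ _ x _ _ H (is_derive_const c x)).
  apply (is_derive_eq _ _ _ _ D). unfold minus, zero, plus, opp; simpl. ring.
Qed.

Lemma aff_der a d s : is_derive (fun t => a + t * d) s d.
Proof. auto_derive. auto. ring. Qed.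

Lemma pd1_opp v : pd1 (fun x y => - v x y) = fun x y => - pd1 v x y.
Proof. apply functional_extensionality; intro x; apply functional_extensionality; intro y.
  unfold pd1. apply (Derive_opp (fun t => v t y)). Qed.
Lemma pd2_opp v : pd2 (fun x y => - v x y) = fun x y => - pd2 v x y.
Proof. apply functional_extensionality; intro x; apply functional_extensionality; intro y.
  unfold pd2. apply (Derive_opp (fun t => v x t)). Qed.

Lemma cont2_opp g x y : cont2 g x y -> cont2 (fun x y => - g x y) x y.
Proof. intros H. apply cont2_2d. apply continuity_2d_pt_opp. apply cont2_2d. exact H. Qed.

Lemma C1_opp v : C1_on whole v -> C1_on whole (fun x y => - v x y).
Proof.
  intros H x y _. destruct (H x y I) as [A [B [C [D E]]]].
  rewrite pd1_opp, pd2_opp.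
  split. exact (ex_derive_opp (K:=R_AbsRing) (V:=R_NormedModule) (fun t => v t y) x A).
  split. exact (ex_derive_opp (K:=R_AbsRing) (V:=R_NormedModule) (fun t => v x t) y B).
  split. apply cont2_opp; exact C.
  split. apply cont2_opp; exact D. apply cont2_opp; exact E.
Qed.

Theorem propositionA1
  (v1 v2 : R -> R -> R) (Omega : R -> R -> Prop) (J : nat)
  (psibar : R -> R -> R) (f : R -> R) :
  stationary_euler v1 v2 ->
  open2 Omega -> connected2 Omega -> bounded2 Omega ->
  C1_boundary Omega ->
  (1 <= J)%nat -> has_J_components (bdry2 Omega) J ->
  C2_closure Omega psibar ->
  (forall x, contR1 f x) ->
  (forall x y, Omega x y -> laplacian2 psibar x y + f (psibar x y) = 0) ->
  (forall x y, Omega x y -> v1 x y = pd2 psibar x y /\ v2 x y = - pd1 psibar x y) ->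
  (forall x y, ~ Omega x y -> v1 x y = 0 /\ v2 x y = 0) ->
  exists psi : R -> R -> R,
    C2_on whole psi /\
    (forall x y, v1 x y = pd2 psi x y /\ v2 x y = - pd1 psi x y) /\
    (forall x y, laplacian2 psi x y + f (psi x y) = 0).
Proof.
  intros [Hv1 [Hv2 [p [Hp Heq]]]] Hopen Hconn Hbdd Hbd HJ1 Hcomp Hpsib Hf Hlap Hin Hout.
  assert (Hdiv : forall x y, pd1 v1 x y + pd2 v2 x y = 0) by (intros; apply Heq).
  destruct Hpsib as [[HC1b _] _].
  assert (Hne : exists x0 y0, Omega x0 y0).
  { destruct Hcomp as [C [HC [_ HS]]]. destruct (HC 0%nat ltac:(lia)) as [[a [b Hab]] _].
    assert (Hb : bdry2 Omega a b) by (apply HS; exists 0%nat; split; [lia|exact Hab]).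
    destruct Hb as [Hcl _]. destruct (Hcl 1 Rlt_0_1) as [x [y [Hxy _]]]. exists x, y; exact Hxy. }
  destruct Hne as [x0 [y0 H0]].
  set (g := fun x y => Psi v1 v2 x y - psibar x y).
  set (c0 := g x0 y0).
  assert (Dg1 : forall x y, Omega x y -> is_derive (fun t => g t y) x 0).
  { intros x y Hxy. unfold g.
    assert (D := is_derive_minus _ _ x _ _ (Psi_d1 v1 v2 x y Hv2)
                   (Derive_correct (fun t => psibar t y) x (proj1 (HC1b x y Hxy)))).
    apply (is_derive_eq _ _ _ _ D).
    destruct (Hin x y Hxy) as [_ E]. rewrite E. unfold pd1, minus, plus, opp; simpl. ring. }
  assert (Dg2 : forall x y, Omega x y -> is_derive (fun t => g x t) y 0).
  { intros x y Hxy. unfold g.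
    assert (D := is_derive_minus _ _ y _ _ (Psi_d2 v1 v2 x y Hv1 Hv2 Hdiv)
                   (Derive_correct (fun t => psibar x t) y (proj1 (proj2 (HC1b x y Hxy))))).
    apply (is_derive_eq _ _ _ _ D).
    destruct (Hin x y Hxy) as [E _]. rewrite E. unfold pd2, minus, plus, opp; simpl. ring. }
  assert (Hconst : forall x y, Omega x y -> g x y = c0).
  { destruct (Hconn (fun x y => Omega x y /\ g x y = c0) (fun x y => Omega x y /\ g x y <> c0)) as [H|H].
    - intros a b [Ha Hg]. destruct (Hopen a b Ha) as [r [Hr Hball]]. exists r. split. exact Hr.
      intros x y Hxy. split. apply Hball; exact Hxy. rewrite <- Hg.
      apply (ball_const Omega g a b r Hball Dg1 Dg2 x y Hxy).
    - intros a b [Ha Hg]. destruct (Hopen a b Ha) as [r [Hr Hball]]. exists r. split. exact Hr.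
      intros x y Hxy. split. apply Hball; exact Hxy.
      rewrite (ball_const Omega g a b r Hball Dg1 Dg2 x y Hxy). exact Hg.
    - intros x y Hxy. destruct (Req_dec (g x y) c0); [left|right]; split; assumption.
    - intros x y _ [_ A] [_ B]. contradiction.
    - exfalso. apply (H x0 y0 H0). split. exact H0. reflexivity.
    - intros x y Hxy. apply NNPP. intros Hn. apply (H x y Hxy). split; assumption. }
  set (psi := fun x y => Psi v1 v2 x y - c0).
  assert (Dp1 : forall x y, is_derive (fun t => psi t y) x (- v2 x y)).
  { intros. unfold psi. apply is_derive_sub_const. apply Psi_d1; exact Hv2. }
  assert (Dp2 : forall x y, is_derive (fun t => psi x t) y (v1 x y)).
  { intros. unfold psi. apply is_derive_sub_const. apply Psi_d2; assumption. }
  assert (E1 : pd1 psi = fun x y => - v2 x y).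
  { unfold pd1. apply functional_extensionality; intro x. apply functional_extensionality; intro y.
    apply is_derive_unique. apply Dp1. }
  assert (E2 : pd2 psi = v1).
  { unfold pd2. apply functional_extensionality; intro x. apply functional_extensionality; intro y.
    apply is_derive_unique. apply Dp2. }
  assert (Cv1 : forall x y, continuity_2d_pt v1 x y) by (intros; apply cont2_2d; apply (Hv1 x y I)).
  assert (Cnv2 : forall x y, continuity_2d_pt (fun x y => - v2 x y) x y).
  { intros; apply continuity_2d_pt_opp; apply cont2_2d; apply (Hv2 x y I). }
  assert (Dpsi : forall x y, differentiable_pt_lim psi x y (- v2 x y) (v1 x y)).
  { intros x y. exact (diff_partials psi (fun x y => - v2 x y) v1 x y Dp1 Dp2 (Cnv2 x y) (Cv1 x y)). }
  assert (Cpsi : forall x y, continuity_2d_pt psi x y).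
  { intros x y. apply differentiable_continuity_pt. exists (- v2 x y), (v1 x y). apply Dpsi. }
  set (om := fun x y => - pd1 v2 x y + pd2 v1 x y).
  assert (Com : forall x y, continuity_2d_pt om x y).
  { intros x y. unfold om. apply continuity_2d_pt_plus.
    apply continuity_2d_pt_opp. apply cont2_2d. apply (Hv2 x y I).
    apply cont2_2d. apply (Hv1 x y I). }
  assert (Lap : forall x y, laplacian2 psi x y = om x y).
  { intros x y. unfold laplacian2. rewrite E1, E2, pd1_opp. reflexivity. }
  assert (Hpsi_eq : forall x y, Omega x y -> psi x y = psibar x y).
  { intros x y H. unfold psi. rewrite <- (Hconst x y H). unfold g. ring. }
  assert (Hom_eq : forall x y, Omega x y -> om x y = laplacian2 psibar x y).
  { intros x y Hxy. destruct (Hopen x y Hxy) as [r [Hr Hb]].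
    assert (A : pd1 (pd1 psibar) x y = - pd1 v2 x y).
    { unfold pd1 at 1. rewrite (Derive_ext_loc _ (fun t => - v2 t y)).
      rewrite (Derive_opp (fun t => v2 t y)). reflexivity.
      apply (locR _ (r/2)). lra. intros t Ht.
      assert (Ht' : Omega t y).
      { apply Hb. apply box_ball. lra. exact Ht. rewrite Rminus_diag, Rabs_R0; lra. }
      destruct (Hin t y Ht') as [_ E]. lra. }
    assert (B : pd2 (pd2 psibar) x y = pd2 v1 x y).
    { unfold pd2 at 1. rewrite (Derive_ext_loc _ (fun t => v1 x t)). reflexivity.
      apply (locR _ (r/2)). lra. intros t Ht.
      assert (Ht' : Omega x t).
      { apply Hb. apply box_ball. lra. rewrite Rminus_diag, Rabs_R0; lra. exact Ht. }
      destruct (Hin x t Ht') as [E _]. lra. }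
    unfold laplacian2, om. rewrite A, B. reflexivity. }
  set (G := fun x y => om x y + f (psi x y)).
  assert (CG : forall x y, continuity_2d_pt G x y).
  { intros x y. unfold G. apply continuity_2d_pt_plus. apply Com.
    apply continuity_1d_2d_pt_comp. apply continuity_pt_filterlim. apply Hf. apply Cpsi. }
  assert (G0 : forall x y, Omega x y -> G x y = 0).
  { intros x y H. unfold G. rewrite Hom_eq, Hpsi_eq by exact H. apply Hlap; exact H. }
  assert (Gcl : forall x y, closure2 Omega x y -> G x y = 0).
  { intros x y H. apply (zero_on_closure Omega G x y G0 (CG x y) H). }
  exists psi. split; [|split].
  - unfold C2_on. rewrite E1, E2. split; [|split].
    + intros x y _. split. exists (- v2 x y); apply Dp1. split. exists (v1 x y); apply Dp2.
      split. apply cont2_2d; apply Cpsi. rewrite E1, E2. split. apply cont2_2d. apply Cnv2. apply (Hv1 x y I).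
    + apply C1_opp. exact Hv2.
    + exact Hv1.
  - intros x y. rewrite E1, E2. split; [reflexivity | ring].
  - intros x y. rewrite Lap.
    destruct (classic (closure2 Omega x y)) as [Hc|Hc].
    + exact (Gcl x y Hc).
    + assert (Hom0 : forall a b, ~ closure2 Omega a b -> om a b = 0).
      { intros a b Hn. unfold om.
        destruct (vanish_pd Omega v2 a b Hn (fun x y H => proj2 (Hout x y H))) as [A _].
        destruct (vanish_pd Omega v1 a b Hn (fun x y H => proj1 (Hout x y H))) as [_ B].
        rewrite A, B. ring. }
      rewrite (Hom0 x y Hc).
      set (dx := x0 - x). set (dy := y0 - y).
      destruct (first_hit (fun t => closure2 Omega (x + t * dx) (y + t * dy))) as [ts [Hts [Pts Hbef]]].
      * replace (x + 0 * dx) with x by ring. replace (y + 0 * dy) with y by ring. exact Hc.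
      * replace (x + 1 * dx) with x0 by (unfold dx; ring). replace (y + 1 * dy) with y0 by (unfold dy; ring).
        apply in_closure; exact H0.
      * intros t Hn. destruct (not_closure_open _ _ _ Hn) as [r [Hr Hb]].
        set (k := 1 + Rabs dx + Rabs dy).
        assert (Hk : 0 < k) by (unfold k; assert (Hx := Rabs_pos dx); assert (Hy := Rabs_pos dy); lra).
        exists (r / k). split. apply Rdiv_lt_0_compat; assumption.
        intros s Hs.
        assert (K : Rabs (s - t) * k < r).
        { replace r with (r / k * k) by (field; lra). apply Rmult_lt_compat_r; assumption. }
        assert (Kx : Rabs dx <= k) by (unfold k; assert (Hy := Rabs_pos dy); lra).
        assert (Ky : Rabs dy <= k) by (unfold k; assert (Hx := Rabs_pos dx); lra).
        assert (Ps := Rabs_pos (s - t)).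
        apply (Hb (x + s * dx) (y + s * dy)).
        -- replace (x + s * dx - (x + t * dx)) with ((s - t) * dx) by ring. rewrite Rabs_mult.
           assert (Rabs (s - t) * Rabs dx <= Rabs (s - t) * k) by (apply Rmult_le_compat_l; assumption). lra.
        -- replace (y + s * dy - (y + t * dy)) with ((s - t) * dy) by ring. rewrite Rabs_mult.
           assert (Rabs (s - t) * Rabs dy <= Rabs (s - t) * k) by (apply Rmult_le_compat_l; assumption). lra.
      * set (h := fun s => psi (x + s * dx) (y + s * dy)).
        assert (Dh : forall s, is_derive h s (- v2 (x + s * dx) (y + s * dy) * dx + v1 (x + s * dx) (y + s * dy) * dy)).
        { intros s. apply is_derive_Reals. unfold h.
          apply (derivable_pt_lim_comp_2d psi (fun s => x + s * dx) (fun s => y + s * dy) s).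
          apply Dpsi. apply is_derive_Reals. apply aff_der. apply is_derive_Reals. apply aff_der. }
        assert (Hh : h ts = h 0).
        { apply mvt0.
          - intros s Hs. rewrite Rmin_left, Rmax_right in Hs by lra.
            apply (is_derive_eq _ _ _ _ (Dh s)).
            assert (Hno : ~ Omega (x + s * dx) (y + s * dy)).
            { intros Ho. apply (Hbef s). lra. apply in_closure. exact Ho. }
            destruct (Hout _ _ Hno) as [A B]. rewrite A, B. simpl. lra.
          - intros s _. apply (is_derive_cpt _ _ _ (Dh s)). }
        assert (Homts : om (x + ts * dx) (y + ts * dy) = 0).
        { apply (lim_left_zero (fun s => om (x + s * dx) (y + s * dy)) ts).
          apply cont2_affine. apply cont2_2d. apply Com. lra.
          intros s Hs. apply Hom0. apply Hbef. exact Hs. }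
        assert (HG := Gcl _ _ Pts). unfold G in HG. rewrite Homts in HG.
        assert (E0 : h 0 = psi x y). { unfold h. replace (x + 0 * dx) with x by ring. replace (y + 0 * dy) with y by ring. reflexivity. }
        rewrite E0 in Hh. change (psi (x + ts * dx) (y + ts * dy) = psi x y) in Hh. rewrite Hh in HG. lra.
Qed.
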